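(* Let $L\in\mathbb{R}^{n\times n}$ be the Laplacian matrix of an undirected weighted graph, with eigenvalues $\lambda_1(L)\le\cdots\le\lambda_n(L)$ and orthonormal eigenvectors $v_1(L),\dots,v_n(L)$, and let $V_k=[v_1(L)\ \cdots\ v_k(L)]$, $\Lambda_k=\mathrm{diag}\{\lambda_i(L)\}_{i=1}^k$. Suppose $L$ is $k$-block-ideal with respect to a $k$-way partition $\{\mathcal{I}_1,\dots,\mathcal{I}_k\}$ of $[n]$, with invertible matrix $S\in\mathbb{R}^{k\times k}$ satisfying $V_k=P_{\{\mathcal{I}_i\}_{i=1}^k}S$, where $$P_{\{\mathcal{I}_i\}_{i=1}^k}:=[\mathbf{1}_{\mathcal{I}_1}\ \mathbf{1}_{\mathcal{I}_2}\ \cdots\ \mathbf{1}_{\mathcal{I}_k}].$$ Let $g_1(s),\dots,g_n(s)$, $f(s)$ be scalar transfer functions, $G(s)=\mathrm{diag}\{g_i(s)\}_{i=1}^n$ and $T_k(s)=V_k(V_k^TG^{-1}(s)V_k+f(s)\Lambda_k)^{-1}V_k^T$. Then $$T_k(s)=P_{\{\mathcal{I}_i\}_{i=1}^k}\big(I_k+\hat{G}(s)L_kf(s)\big)^{-1}\hat{G}(s)P^T_{\{\mathcal{I}_i\}_{i=1}^k},$$ where $\hat{G}(s)=\mathrm{diag}\{\hat{g}_i(s)\}_{i=1}^k$, $\hat{g}_i(s)=\big(\sum_{j\in\mathcal{I}_i}g_j^{-1}(s)\big)^{-1}$, and $L_k=(S^{-1})^T\Lambda_kS^{-1}$.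
   Context: For $\mathcal{I}\subseteq[n]=\{1,\dots,n\}$, $\mathbf{1}_{\mathcal{I}}\in\mathbb{R}^n$ is the indicator vector with $[\mathbf{1}_\mathcal{I}]_i=1$ if $i\in\mathcal{I}$ and $0$ otherwise. A Laplacian $L$ is called $k$-block-ideal with respect to a $k$-way partition $\{\mathcal{I}_1,\dots,\mathcal{I}_k\}$ of $[n]$ if there exists an invertible $S\in\mathbb{R}^{k\times k}$ with $[v_1(L)\ \cdots\ v_k(L)]=[\mathbf{1}_{\mathcal{I}_1}\ \cdots\ \mathbf{1}_{\mathcal{I}_k}]S$. *)

(* Defs.v *)
From HB Require Import structures.
From mathcomp Require Import all_boot all_order all_algebra.
From mathcomp Require Import complex.
Set Implicit Arguments. Unset Strict Implicit. Unset Printing Implicit Defensive.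
Import Order.TTheory GRing.Theory Num.Theory.
Local Open Scope ring_scope.

(* Laplacian of an undirected weighted graph on n nodes:
   L = D - A with A symmetric, nonnegative weights, zero diagonal;
   equivalently L symmetric, off-diagonal entries <= 0, zero row sums. *)
Definition is_laplacian (R : realDomainType) (n : nat) (L : 'M[R]_n) : Prop :=
  [/\ L^T = L,
      (forall i j : 'I_n, i != j -> L i j <= 0) &
      (forall i : 'I_n, \sum_(j < n) L i j = 0)].

(* indicator matrix P = [1_{I_1} ... 1_{I_k}] of the partition given by the
   block-label function lab : node j belongs to block I_(lab j). *)
Definition part_mx (R : nzRingType) (n k : nat) (lab : 'I_n -> 'I_k) : 'M[R]_(n, k) :=
  \matrix_(j < n, i < k) (lab j == i)%:R.

Definition firstcols (R : Type) (n k : nat) (hk : (k <= n)%N) (V : 'M[R]_n) : 'M[R]_(n, k) :=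
  \matrix_(i < n, j < k) V i (widen_ord hk j).

Definition cmx (R : rcfType) (m p : nat) (A : 'M[R]_(m, p)) : 'M[R[i]]_(m, p) :=
  map_mx (fun x => x%:C%C) A.

(* Main.v *)
Require Import Defs.
From HB Require Import structures.
From mathcomp Require Import all_boot all_order all_algebra.
From mathcomp Require Import complex.
Import Order.TTheory GRing.Theory Num.Theory.
Local Open Scope ring_scope.

Lemma inv_uniq (F : comUnitRingType) (m : nat) (A B : 'M[F]_m) :
  A *m B = 1%:M -> invmx A = B.
Proof.
move=> AB; have [Au _] := mulmx1_unit AB.
by rewrite -[invmx A]mulmx1 -AB mulmxA mulVmx // mul1mx.
Qed.

Lemma diag_inv (F : fieldType) (m : nat) (d : 'rV[F]_m) :
  (forall i, d 0 i != 0) ->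
  diag_mx d *m diag_mx (\row_i (d 0 i)^-1) = 1%:M.
Proof.
move=> nz; rewrite mul_diag_mx; apply/matrixP => i j.
rewrite !mxE; case: (eqVneq i j) => [->|ne] /=; first by rewrite mulr1n divff.
by rewrite mulr0n mulr0.
Qed.

Section C.
Variable R : rcfType.
Lemma cmxM m p q (A : 'M[R]_(m, p)) (B : 'M[R]_(p, q)) :
  cmx (A *m B) = cmx A *m cmx B.
Proof. exact: (map_mxM (real_complex R)). Qed.
Lemma cmxT m p (A : 'M[R]_(m, p)) : cmx A^T = (cmx A)^T.
Proof. by rewrite /cmx map_trmx. Qed.
Lemma cmxV m (A : 'M[R]_m) : cmx (invmx A) = invmx (cmx A).
Proof. exact: (map_invmx (real_complex R)). Qed.
End C.

Theorem theorem3 (R : rcfType) (n k : nat) (hk : (k <= n)%N)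
    (L : 'M[R]_n) (lam : 'I_n -> R) (V : 'M[R]_n)
    (lab : 'I_n -> 'I_k) (S : 'M[R]_k)
    (g : 'I_n -> R[i] -> R[i]) (f : R[i] -> R[i]) :
  is_laplacian L ->
  (* eigenvalues sorted nondecreasingly *)
  (forall i j : 'I_n, (i <= j)%N -> lam i <= lam j) ->
  (* orthonormal eigenvectors: columns of V *)
  V^T *m V = 1%:M ->
  L *m V = V *m diag_mx (\row_i lam i) ->
  (* the partition {I_1,...,I_k} has nonempty blocks *)
  (forall i : 'I_k, exists j : 'I_n, lab j = i) ->
  (* k-block-ideal: V_k = P S with S invertible *)
  S \in unitmx ->
  firstcols hk V = part_mx R lab *m S ->
  forall s : R[i],
  let Vk := cmx (firstcols hk V) in
  let Lamk := cmx (diag_mx (\row_(j < k) lam (widen_ord hk j))) in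
  let G := diag_mx (\row_j g j s) in
  let P := cmx (part_mx R lab) in
  let Ghat := diag_mx (\row_(i < k) (\sum_(j < n | lab j == i) (g j s)^-1)^-1) in
  let Lk := cmx ((invmx S)^T *m diag_mx (\row_(j < k) lam (widen_ord hk j)) *m invmx S) in
  (* well-definedness of the expressions at s *)
  (forall j : 'I_n, g j s != 0) ->
  (forall i : 'I_k, \sum_(j < n | lab j == i) (g j s)^-1 != 0) ->
  (Vk^T *m invmx G *m Vk + f s *: Lamk) \in unitmx ->
  Vk *m invmx (Vk^T *m invmx G *m Vk + f s *: Lamk) *m Vk^T
  = P *m invmx (1%:M + Ghat *m Lk *m (f s)%:M) *m Ghat *m P^T.
Proof.
move=> _ _ _ _ _ Su HV s Vk Lamk G P Ghat Lk Hg Hsum HM.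
set d := \row_(i < k) \sum_(j < n | lab j == i) (g j s)^-1.
set Dinv := diag_mx d.
set Sc := cmx S.
have Scu : Sc \in unitmx by rewrite /Sc /cmx map_unitmx.
set Sc' := invmx Sc.
have hSS : Sc' *m Sc = 1%:M by rewrite mulVmx.
have hSS' : Sc^T *m Sc'^T = 1%:M by rewrite -trmx_mul hSS trmx1.
have hGhat : Ghat = invmx Dinv.
  symmetry; apply: inv_uniq.
  have -> : Ghat = diag_mx (\row_i (d 0 i)^-1).
    by congr diag_mx; apply/matrixP => i j; rewrite !mxE.
  by apply: diag_inv => i; rewrite mxE.
have DinvGhat : Dinv *m Ghat = 1%:M.
  rewrite hGhat mulmxV //.
  have : Dinv *m diag_mx (\row_i (d 0 i)^-1) = 1%:M.
    by apply: diag_inv => i; rewrite mxE.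
  by case/mulmx1_unit.
have hG : invmx G = diag_mx (\row_j (g j s)^-1).
  apply: inv_uniq; have := @diag_inv _ _ (\row_j g j s).
  have -> : \row_i ((\row_j g j s) 0 i)^-1 = \row_j (g j s)^-1.
    by apply/matrixP => i j; rewrite !mxE.
  by apply => i; rewrite mxE.
have hPGP : P^T *m invmx G *m P = Dinv.
  rewrite hG mul_mx_diag; apply/matrixP => i i'.
  rewrite !mxE (big_mkcond (fun j => lab j == i)) /=.
  case: (eqVneq i i') => [<-|ne].
    rewrite mulr1n; apply: eq_bigr => j _.
    rewrite !mxE rmorph_nat; case: (eqVneq (lab j) i) => _ /=.
      by rewrite mulr1 mul1r.
    by rewrite !mulr0.
  rewrite mulr0n; apply: big1 => j _.
  rewrite !mxE !rmorph_nat; case: (eqVneq (lab j) i) => [->|] /=.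
    by rewrite (negbTE ne) mulr0.
  by move=> _; rewrite !mul0r.
have hVk : Vk = P *m Sc by rewrite /Vk HV cmxM.
have hLk : Lk = Sc'^T *m Lamk *m Sc' by rewrite /Lk !cmxM cmxT cmxV.
set N := Dinv + f s *: Lk.
have hM : Vk^T *m invmx G *m Vk + f s *: Lamk = Sc^T *m N *m Sc.
  rewrite hVk trmx_mul -!mulmxA (mulmxA P^T) (mulmxA (P^T *m _)) hPGP.
  rewrite /N mulmxDl mulmxDr -?mulmxA; congr (_ + _).
  rewrite -scalemxAl -scalemxAr; congr (_ *: _).
  by rewrite hLk -!mulmxA hSS mulmx1 !mulmxA hSS' mul1mx.
rewrite hM in HM *.
have hN : N = Sc'^T *m (Sc^T *m N *m Sc) *m Sc'.
  by rewrite !mulmxA -trmx_mul mulmxV // trmx1 mul1mx -mulmxA mulmxV // mulmx1.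
have Nu : N \in unitmx.
  by rewrite hN unitmx_mul (unitmx_mul Sc'^T) HM unitmx_tr /Sc' unitmx_inv Scu.
have invM : invmx (Sc^T *m N *m Sc) = Sc' *m invmx N *m Sc'^T.
  apply: inv_uniq.
  by rewrite -!mulmxA (mulmxA Sc) mulmxV // mul1mx (mulmxA N) mulmxV // mul1mx.
have hR : 1%:M + Ghat *m Lk *m (f s)%:M = Ghat *m N.
  by rewrite mul_mx_scalar /N mulmxDr hGhat mulVmx ?(mulmx1_unit DinvGhat).1 //
     scalemxAr.
have invR : invmx (Ghat *m N) = invmx N *m Dinv.
  apply: inv_uniq.
  by rewrite -mulmxA (mulmxA N) mulmxV // mul1mx hGhat mulVmx // (mulmx1_unit DinvGhat).1.
rewrite invM hR invR hVk trmx_mul.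
rewrite -!mulmxA; congr (_ *m _).
have hSS2 : Sc'^T *m Sc^T = 1%:M by rewrite -trmx_mul mulmxV // trmx1.
rewrite !mulmxA mulmxV // mul1mx -(mulmxA _ Sc'^T) hSS2 mulmx1.
by rewrite -(mulmxA _ Dinv) DinvGhat mulmx1.
Qed.
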